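(* Let $\gamma$ be a functorial. Then: (1) If $\gamma$ satisfies (F1) and (F2), then $\gamma(G_1\times G_2)=\gamma(G_1)\times\gamma(G_2)$ for all groups $G_1,G_2$. (2) If $\gamma$ satisfies (F2) and (F3), then $\mathrm{F}^*(G)\subseteq\gamma(G)$ for every group $G$. (3) If $\gamma$ satisfies (F4), then $\gamma(G)\le\tilde{\mathrm{F}}(G)$ for every group $G$. (4) $\gamma^\infty$ is idempotent, i.e. $\gamma^\infty(\gamma^\infty(G))=\gamma^\infty(G)$ for every group $G$.
   Context: All groups are finite. A functorial is a function $\theta$ assigning to each group $G$ a characteristic subgroup $\theta(G)$ such that $f(\theta(G))=\theta(f(G))$ for every isomorphism $f:G\to G^*$. Conditions (for every group $G$): (F1) $f(\gamma(G))\subseteq\gamma(f(G))$ for every epimorphism $f:G\to G^*$; (F2) $\gamma(N)\subseteq\gamma(G)$ for every $N\trianglelefteq G$; (F3) $C_G(\gamma(G))\subseteq\gamma(G)$; (F4) $\gamma(G)/\Phi(G)\subseteq\mathrm{Soc}(G/\Phi(G))$. $\mathrm{F}^*(G)$ is the generalized Fitting subgroup; $\tilde{\mathrm{F}}(G)$ is defined by $\Phi(G)\subseteq\tilde{\mathrm{F}}(G)$ and $\tilde{\mathrm{F}}(G)/\Phi(G)=\mathrm{Soc}(G/\Phi(G))$. $\gamma^{(1)}=\gamma$, $\gamma^{(i+1)}(G)=\gamma(\gamma^{(i)}(G))$, $\gamma^\infty(G)=\bigcap_{i\in\mathbb{N}}\gamma^{(i)}(G)$. *)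

(* Defs.v *)
From HB Require Import structures.
From mathcomp Require Import boolp.
From mathcomp Require Import all_boot all_fingroup all_solvable.
Set Implicit Arguments. Unset Strict Implicit. Unset Printing Implicit Defensive.
Local Open Scope group_scope.

Definition gobj := forall gT : finGroupType, {set gT} -> {set gT}.

Definition functorial (th : gobj) : Prop :=
  (forall (gT : finGroupType) (G : {group gT}),
      group_set (th gT G) /\ th gT G \char G) /\
  (forall (gT rT : finGroupType) (G : {group gT}) (f : {morphism G >-> rT}),
      'injm f -> f @* (th gT G) = th rT (f @* G)).

Definition condF1 (ga : gobj) : Prop :=
  forall (gT rT : finGroupType) (G : {group gT}) (f : {morphism G >-> rT}),
    f @* (ga gT G) \subset ga rT (f @* G).

Definition condF2 (ga : gobj) : Prop :=
  forall (gT : finGroupType) (G N : {group gT}), N <| G -> ga gT N \subset ga gT G.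

Definition condF3 (ga : gobj) : Prop :=
  forall (gT : finGroupType) (G : {group gT}), 'C_G(ga gT G) \subset ga gT G.

Definition socle (gT : finGroupType) (A : {set gT}) : {set gT} :=
  << \bigcup_(M : {group gT} | (M \subset A) && minnormal M A) M >>.

Definition condF4 (ga : gobj) : Prop :=
  forall (gT : finGroupType) (G : {group gT}),
    ga gT G / 'Phi(G) \subset socle (G / 'Phi(G)).

Definition Ftilde (gT : finGroupType) (G : {group gT}) : {set gT} :=
  coset 'Phi(G) @*^-1 socle (G / 'Phi(G)).

Definition quasisimple (gT : finGroupType) (H : {group gT}) : bool :=
  ([~: H, H] == H) && simple (H / 'Z(H)).

Definition layer (gT : finGroupType) (G : {set gT}) : {set gT} :=
  << \bigcup_(H : {group gT} | subnormal H G && quasisimple H) H >>.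

Definition Fstar (gT : finGroupType) (G : {set gT}) : {set gT} :=
  'F(G) <*> layer G.

Definition giter (ga : gobj) (i : nat) (gT : finGroupType) (A : {set gT}) : {set gT} :=
  iter i (ga gT) A.

Definition ginf (ga : gobj) (gT : finGroupType) (A : {set gT}) : {set gT} :=
  [set x | `[< forall i : nat, x \in giter ga i.+1 A >]].

(* Main.v *)
Require Import Defs.
From HB Require Import structures.
From mathcomp Require Import boolp.
From mathcomp Require Import all_boot all_fingroup all_solvable.
Set Implicit Arguments. Unset Strict Implicit. Unset Printing Implicit Defensive.
Local Open Scope group_scope.

Lemma ga_group (ga : gobj) (Hfun : functorial ga) (gT : finGroupType) (G : {group gT}) :
  group_set (ga gT G).
Proof. exact: (proj1 (proj1 Hfun gT G)). Qed.

Definition gaG (ga : gobj) (Hfun : functorial ga) (gT : finGroupType) (G : {group gT}) :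
  {group gT} := Group (ga_group Hfun G).

Lemma ga_char (ga : gobj) (Hfun : functorial ga) (gT : finGroupType) (G : {group gT}) :
  ga gT G \char G.
Proof. exact: (proj2 (proj1 Hfun gT G)). Qed.

Lemma ga_sub (ga : gobj) (Hfun : functorial ga) (gT : finGroupType) (G : {group gT}) :
  ga gT G \subset G.
Proof. exact: char_sub (ga_char Hfun G). Qed.

Lemma ga_normal (ga : gobj) (Hfun : functorial ga) (gT : finGroupType) (G : {group gT}) :
  ga gT G <| G.
Proof. exact: (@char_normal _ (gaG Hfun G) G (ga_char Hfun G)). Qed.

Lemma ga_subnormal (ga : gobj) (Hfun : functorial ga) (F2 : condF2 ga)
  (gT : finGroupType) (H G : {group gT}) : H <|<| G -> ga gT H \subset ga gT G.
Proof.
case/subnormalP=> s; elim: s H => [|K s IH] H /=; first by move=> _ ->.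
case/andP=> nHK Ks defG; apply: subset_trans (F2 _ _ _ nHK) (IH K Ks defG).
Qed.

Lemma maximal_nil_normal (gT : finGroupType) (M X : {group gT}) :
  nilpotent X -> maximal M X -> M <| X.
Proof.
move=> nilX /maxgroupP[prM maxM].
have prN := nilpotent_proper_norm nilX prM.
have sNX : 'N_X(M) \subset X by apply: subsetIl.
have [eqN|prN'] := eqVproper sNX.
  by rewrite /normal (proper_sub prM) -{1}eqN subsetIr.
have := maxM _ prN' (proper_sub prN) => eqNM.
by move: prN; rewrite eqNM properxx.
Qed.

Lemma ga_nil (ga : gobj) (Hfun : functorial ga) (F2 : condF2 ga) (F3 : condF3 ga)
  (gT : finGroupType) (X : {group gT}) : nilpotent X -> ga gT X = X.
Proof.
move: {2}#|X| (leqnn #|X|) => n; elim: n X => [|n IH] X leX nilX.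
  by rewrite leqNgt cardG_gt0 in leX.
apply/eqP; rewrite eqEsubset ga_sub //=.
apply/negPn/negP => /subsetPn[x Xx xnK].
have sxX : <[x]> \subset X by rewrite cycle_subG.
have cycX : <[x]> = X.
  have [//|[M maxM sxM]] := maximal_exists sxX.
  have nsMX := maximal_nil_normal nilX maxM.
  have prM := maxgroupp maxM.
  have nilM := nilpotentS (proper_sub prM) nilX.
  have leM : #|M| <= n by rewrite -ltnS (leq_trans (proper_card prM)).
  have := F2 _ _ _ nsMX; rewrite (IH M leM nilM) => sMK.
  by case/negP: xnK; apply: (subsetP sMK); rewrite -cycle_subG.
have cXX : abelian X by rewrite -cycX cycle_abelian.
case/negP: xnK; apply: (subsetP (F3 _ X)).
rewrite inE Xx; apply: (subsetP (centS (ga_sub Hfun X))).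
exact: (subsetP cXX).
Qed.

Lemma ga_qs (ga : gobj) (Hfun : functorial ga) (F3 : condF3 ga)
  (gT : finGroupType) (H : {group gT}) : quasisimple H -> ga gT H = H.
Proof.
case/andP=> _ /simpleP[_ simH].
set K := gaG Hfun H.
have sKH : K \subset H := ga_sub Hfun H.
have sZK : 'Z(H) \subset K.
  apply: subset_trans (F3 _ H); exact: setIS _ (centS sKH).
have nsZH := center_normal H.
have nsZK : 'Z(H) <| K := normalS sZK sKH nsZH.
have nsKH : K <| H := ga_normal Hfun H.
have := simH (K / 'Z(H))%G (quotient_normal _ nsKH).
case=> /= [K1|KH].
  have sKZ : K \subset 'Z(H).
    by rewrite -quotient_sub1 ?K1 // (subset_trans sKH) ?normal_norm.
  apply/eqP; rewrite eqEsubset sKH /=; apply: subset_trans (F3 _ H).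
  rewrite subsetI subxx /= centsC; apply: subset_trans sKZ _.
  exact: subsetIr.
exact: (quotient_inj nsZK nsZH KH).
Qed.

Lemma part2 (ga : gobj) (Hfun : functorial ga) (F2 : condF2 ga) (F3 : condF3 ga)
  (gT : finGroupType) (G : {group gT}) : Fstar G \subset ga gT G.
Proof.
rewrite /Fstar; change ('F(G) <*> layer G \subset gval (gaG Hfun G)); rewrite join_subG; apply/andP; split.
  have := F2 _ _ _ (Fitting_normal G).
  by rewrite (ga_nil Hfun F2 F3 (Fitting_nil G)).
rewrite /layer gen_subG; apply/bigcupsP=> H /andP[snH qsH].
rewrite -{1}(ga_qs Hfun F3 qsH); exact: (ga_subnormal Hfun F2 snH).
Qed.

Lemma part3 (ga : gobj) (Hfun : functorial ga) (F4 : condF4 ga)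
  (gT : finGroupType) (G : {group gT}) : ga gT G \subset Ftilde G.
Proof.
rewrite /Ftilde -sub_morphim_pre ?F4 //.
rewrite (subset_trans (ga_sub Hfun G)) //; exact: normal_norm (Phi_normal G).
Qed.

Lemma giter_group (ga : gobj) (Hfun : functorial ga) (gT : finGroupType) (G : {group gT}) i :
  group_set (giter ga i G).
Proof.
elim: i => [|i IH]; first exact: groupP.
exact: (ga_group Hfun (Group IH)).
Qed.

Lemma giter_dec (ga : gobj) (Hfun : functorial ga) (gT : finGroupType) (G : {group gT}) i :
  giter ga i.+1 G \subset giter ga i G.
Proof. exact: (ga_sub Hfun (Group (giter_group Hfun G i))). Qed.

Lemma giter_decn (ga : gobj) (Hfun : functorial ga) (gT : finGroupType) (G : {group gT}) i j :
  i <= j -> giter ga j G \subset giter ga i G.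
Proof.
move/subnK=> <-; elim: (j - i) => [|k IH]; first by rewrite add0n.
by rewrite addSn; apply: subset_trans (giter_dec Hfun G _) IH.
Qed.

Lemma giter_fix (ga : gobj) (Hfun : functorial ga) (gT : finGroupType) (G : {group gT}) :
  exists n, giter ga n.+1 G = giter ga n G.
Proof.
suff: forall k, (exists n, giter ga n.+1 G = giter ga n G) \/ #|giter ga k G| + k <= #|G|.
  case/(_ #|G|.+1) => // /leq_trans/(_ (leqnn _)); rewrite addnS ltnNge leq_addl //.
elim=> [|k [[m em]|IH]]; first by right; rewrite addn0.
  by left; exists m.
have [eq|ne] := eqVneq (giter ga k.+1 G) (giter ga k G); first by left; exists k.
right; rewrite addnS (leq_trans _ IH) // ltn_add2r proper_card //.
by rewrite properEneq ne giter_dec.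
Qed.

Lemma part4 (ga : gobj) (Hfun : functorial ga) (gT : finGroupType) (G : {group gT}) :
  ginf ga (ginf ga G) = ginf ga G.
Proof.
have [n fixn] := giter_fix Hfun G.
have stab : forall k, giter ga (k + n) G = giter ga n G.
  elim=> [|k IH] //; by rewrite addSn /giter iterS -/(giter ga (k + n) G) IH -iterS.
have sub : forall k, giter ga n G \subset giter ga k G.
  move=> k; have [le|lt] := leqP k n; first exact: giter_decn.
  by rewrite -(subnK (ltnW lt)) stab.
have -> : ginf ga G = giter ga n G.
  apply/setP=> x; rewrite inE; apply/asboolP/idP => [H|Hx i].
    by rewrite -fixn; apply: H.
  exact: (subsetP (sub i.+1)).
apply/setP=> x; rewrite inE; apply/asboolP/idP => [H|Hx i].
  by have := H 0; rewrite /giter -iterD -/(giter ga (1 + n) G) stab.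
by rewrite /giter -iterD -/(giter ga (i.+1 + n) G) stab.
Qed.

Lemma part1 (ga : gobj) (Hfun : functorial ga) (F1 : condF1 ga) (F2 : condF2 ga)
  (gT1 gT2 : finGroupType) (G1 : {group gT1}) (G2 : {group gT2}) :
  ga (gT1 * gT2)%type (setX G1 G2) = setX (ga gT1 G1) (ga gT2 G2).
Proof.
set G := setX_group G1 G2.
have [nsG1 nsG2] := dprod_normal2 (setX_dprod G1 G2).
apply/eqP; rewrite eqEsubset; apply/andP; split.
  apply/subsetP=> [[a b]] xK.
  have xG : (a, b) \in G := subsetP (ga_sub Hfun G) _ xK.
  pose f1 := [morphism of restrm (subsetT G) (@fst_morphism gT1 gT2)].
  pose f2 := [morphism of restrm (subsetT G) (@snd_morphism gT1 gT2)].
  have e1 : f1 @* G = G1.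
    by rewrite morphim_restrm setIid; exact: morphim_fstX.
  have e2 : f2 @* G = G2.
    by rewrite morphim_restrm setIid; exact: morphim_sndX.
  have h1 := F1 _ _ G f1; rewrite e1 in h1.
  have h2 := F1 _ _ G f2; rewrite e2 in h2.
  rewrite inE /=; apply/andP; split.
    by apply: (subsetP h1); apply/morphimP; exists (a, b).
  by apply: (subsetP h2); apply/morphimP; exists (a, b).
rewrite -setX_prod; change (setX (ga gT1 G1) 1 * setX 1 (ga gT2 G2) \subset gval (gaG Hfun G)).
rewrite mul_subG //.
  pose f := [morphism of restrm (subsetT G1) (@pairg1_morphism gT1 gT2)].
  have injf : 'injm f by rewrite injm_restrm ?injm_pairg1.
  have := (proj2 Hfun) _ _ G1 f injf.
  rewrite !morphim_restrm (setIidPr (ga_sub Hfun G1)) setIid !morphim_pairg1 => ->.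
  exact: (F2 _ G (setX_group G1 1%G) nsG1).
pose f := [morphism of restrm (subsetT G2) (@pair1g_morphism gT1 gT2)].
have injf : 'injm f by rewrite injm_restrm ?injm_pair1g.
have := (proj2 Hfun) _ _ G2 f injf.
rewrite !morphim_restrm (setIidPr (ga_sub Hfun G2)) setIid !morphim_pair1g => ->.
exact: (F2 _ G (setX_group 1%G G2) nsG2).
Qed.

Theorem proposition2 (ga : gobj) (Hfun : functorial ga) :
  (condF1 ga -> condF2 ga ->
     forall (gT1 gT2 : finGroupType) (G1 : {group gT1}) (G2 : {group gT2}),
       ga (gT1 * gT2)%type (setX G1 G2) = setX (ga gT1 G1) (ga gT2 G2)) /\
  (condF2 ga -> condF3 ga ->
     forall (gT : finGroupType) (G : {group gT}), Fstar G \subset ga gT G) /\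
  (condF4 ga ->
     forall (gT : finGroupType) (G : {group gT}), ga gT G \subset Ftilde G) /\
  (forall (gT : finGroupType) (G : {group gT}),
     ginf ga (ginf ga G) = ginf ga G).
Proof.
split; first by move=> F1 F2; exact: part1.
split; first by move=> F2 F3; exact: part2.
split; first by move=> F4; exact: part3.
exact: part4.
Qed.
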